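(* Let $G$ be a finite graph with at least one edge, and let $a \ge 1$ be its arboricity. Then $G$ contains a block vertex $v$ with $\deg_G(v) \le 2a-1$.
   Context: A block of a graph is a maximal biconnected component. A vertex is a cut vertex if it lies in two or more blocks; otherwise it is a block vertex. The arboricity of a graph is the minimum number of forests whose union covers all its edges. *)

(* Defs.v *)
From mathcomp Require Import all_boot.
Set Implicit Arguments. Unset Strict Implicit. Unset Printing Implicit Defensive.

Section Graphs.
Variable T : finType.

Definition simple_graph (e : rel T) : Prop := symmetric e /\ irreflexive e.

Definition deg (e : rel T) (v : T) : nat := #|[set w | e v w]|.

Definition induced (e : rel T) (B : {set T}) : rel T :=
  [rel x y | [&& e x y, x \in B & y \in B]].

(* G[B] is connected (the empty set counts as connected) *)
Definition connected_on (e : rel T) (B : {set T}) : Prop :=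
  forall x y, x \in B -> y \in B -> connect (induced e B) x y.

(* G[B] is biconnected: at least two vertices, connected, and no cut vertex
   (removing any single vertex leaves it connected); this covers K2. *)
Definition biconnected (e : rel T) (B : {set T}) : Prop :=
  1 < #|B| /\ connected_on e B /\ forall x, x \in B -> connected_on e (B :\ x).

Definition block (e : rel T) (B : {set T}) : Prop :=
  biconnected e B /\ forall B' : {set T}, B \subset B' -> biconnected e B' -> B' = B.

Definition block_vertex (e : rel T) (v : T) : Prop :=
  exists B : {set T}, [/\ block e B, v \in B & forall B' : {set T}, block e B' -> v \in B' -> B' = B].

Definition cut_vertex (e : rel T) (v : T) : Prop :=
  exists B1 B2 : {set T}, [/\ block e B1, block e B2, B1 != B2, v \in B1 & v \in B2].

Definition forest (f : rel T) : Prop :=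
  symmetric f /\ irreflexive f /\
  forall s : seq T, uniq s -> 2 < size s -> ~~ cycle f s.

Definition forest_cover (e : rel T) (k : nat) : Prop :=
  exists F : 'I_k -> rel T,
    [/\ forall i, forest (F i),
        forall i x y, F i x y -> e x y
      & forall x y, e x y -> exists i, F i x y].

Definition arboricity (e : rel T) (a : nat) : Prop :=
  forest_cover e a /\ forall k, forest_cover e k -> a <= k.

End Graphs.

(* Main.v *)
Require Import Defs.
From mathcomp Require Import all_boot.
From Stdlib Require Import Classical.
From mathcomp Require Import zify.
Set Implicit Arguments. Unset Strict Implicit. Unset Printing Implicit Defensive.

Section Aux.
Variable T : finType.
Implicit Types (e f R : rel T) (A B C S : {set T}).

Definition N f B v := [set w in B | f v w].
Definition Sm f B := \sum_(v in B) #|N f B v|.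

Lemma cardN f B v : #|N f B v| = \sum_(w in B) (f v w : nat).
Proof.
rewrite -sum1dep_card big_mkcondr /=; apply: eq_bigr => w _.
by case: (f v w).
Qed.

Lemma two_elems A u : 1 < #|A| -> exists2 z, z \in A & z != u.
Proof.
move=> H; apply: NNPP => C.
have: A \subset [set u].
  apply/subsetP => z zA; rewrite inE; apply/negPn/negP => nz; apply: C.
  by exists z.
by move/subset_leq_card; rewrite cards1 leqNgt H.
Qed.

Lemma forest_step f B y t :
  forest f -> y \in B -> 1 < #|N f B y| -> uniq (y :: t) -> path f y t ->
  exists z, [/\ z \in B, z \notin y :: t & f z y].
Proof.
move=> [fsym [firr facyc]] yB Hy un pth.
have [z zN zh] := two_elems (head y t) Hy.
move: zN; rewrite inE => /andP [zB fyz].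
exists z; split => //; last by rewrite fsym.
apply/negP => zin.
have zy : z != y by apply/eqP => E; move: fyz; rewrite E firr.
move: zin; rewrite inE (negbTE zy) /= => zt.
move: zh pth un; case/splitPr: zt => t1 t2.
case: t1 => [|x1 t1] /=; first by rewrite eqxx.
move=> _ pth un.
have sub : subseq (y :: x1 :: rcons t1 z) (y :: x1 :: t1 ++ z :: t2).
  have -> : y :: x1 :: rcons t1 z = (y :: x1 :: t1) ++ [:: z] by rewrite -cats1.
  have -> : y :: x1 :: t1 ++ z :: t2 = (y :: x1 :: t1) ++ z :: t2 by [].
  by apply: cat_subseq; rewrite ?subseq_refl // sub1seq mem_head.
have := facyc (y :: x1 :: rcons t1 z) (subseq_uniq sub un).
rewrite /= size_rcons ltnS ltnS ltn0Sn => /(_ isT).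
move: pth; rewrite /= cat_path => /andP [fyx1 /andP [p1 p2]].
rewrite fyx1 rcons_path last_rcons fsym fyz andbT /=.
rewrite rcons_path p1 /=.
by move: p2 => /= /andP [-> _].
Qed.

Lemma forest_leaf f B x : forest f -> x \in B -> exists2 v, v \in B & #|N f B v| <= 1.
Proof.
move=> fF xB; apply: NNPP => C.
have H : forall v, v \in B -> 1 < #|N f B v|.
  by move=> v vB; rewrite ltnNge; apply/negP => Hv; apply: C; exists v.
suff : forall m y t, y \in B -> all (mem B) t -> uniq (y :: t) -> path f y t ->
  #|B| - size t <= m -> False.
  by move/(_ #|B| x [::] xB isT isT isT); apply; rewrite leq_subr.
elim => [|m IH] y t yB tB un pth hm.
- have : size (y :: t) <= #|B|.
    rewrite -(card_uniqP un); apply: subset_leq_card; apply/subsetP => w.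
    by rewrite inE => /orP [/eqP -> //|]; move/allP: tB; apply.
  by rewrite /=; lia.
- have [z [zB zn fzy]] := forest_step fF yB (H y yB) un pth.
  apply: (IH z (y :: t)) => //=.
  + by rewrite yB.
  + by rewrite zn.
  + by rewrite fzy.
  + lia.
Qed.

Lemma forest_sum f B : forest f -> Sm f B <= 2 * (#|B| - 1).
Proof.
move=> fF; have [fsym [firr _]] := fF.
move Hn: #|B| => n; elim: n B Hn => [|n IH] B Hn.
  by move/eqP: Hn; rewrite cards_eq0 => /eqP ->; rewrite /Sm big_set0.
have [x xB] : exists x, x \in B by apply/set0Pn; rewrite -card_gt0 Hn.
have [v vB lv] := forest_leaf fF xB.
set B' := B :\ v.
have HB' : #|B'| = n by move: Hn; rewrite (cardsD1 v B) vB add1n => [[]].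
have Nsub : N f B v \subset B'.
  apply/subsetP => w; rewrite !inE => /andP [wB fvw]; rewrite wB andbT.
  by apply/eqP => E; move: fvw; rewrite E firr.
have dn : #|N f B v| <= n by rewrite -HB'; apply: subset_leq_card.
have key : \sum_(u in B') #|N f B u| = Sm f B' + #|[set u | (u \in B') && f u v]|.
  rewrite /Sm -sum1dep_card big_mkcondr -big_split /=; apply: eq_bigr => u uB'.
  rewrite (cardsD1 v (N f B u)) addnC; congr (_ + _).
    by apply: eq_card => w; rewrite /N !inE andbA.
  by rewrite /N inE vB /=; case: (f u v).
have sub2 : [set u | (u \in B') && f u v] \subset N f B v.
  apply/subsetP => u; rewrite !inE => /andP [/andP [_ uB] fuv].
  by rewrite uB fsym.
have c2 := subset_leq_card sub2.
have E : Sm f B = #|N f B v| + \sum_(u in B') #|N f B u|.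
  rewrite /Sm (bigD1 v vB) /=; congr (_ + _); apply: eq_bigl => u.
  by rewrite !inE andbC.
have IH' := IH B' HB'.
rewrite E key; lia.
Qed.

Lemma cross R A x y : connect R x y -> x \in A -> y \notin A ->
  exists u w, [/\ u \in A, w \notin A & R u w].
Proof.
move=> /connectP [p pth ->]; elim: p x pth => [|z p IH] x /= pth xA yA.
  by rewrite xA in yA.
case/andP: pth => Rxz pth.
case zA: (z \in A); first exact: IH pth zA yA.
by exists x, z; rewrite zA.
Qed.

Lemma connect_mono R1 R2 : subrel R1 R2 -> forall x y, connect R1 x y -> connect R2 x y.
Proof. by move=> H; apply: connect_sub => u w /H; apply: connect1. Qed.

Lemma ctrans R x y z : connect R x y -> connect R y z -> connect R x z.
Proof. move=> H1 H2; exact: (connect_trans H1 H2). Qed.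

Lemma connect_comp R r z : connect R r z ->
  connect [rel u w | [&& R u w, connect R r u & connect R r w]] r z.
Proof.
move=> /connectP [p pth ->]; apply/connectP; exists p => //.
suff : forall x, connect R r x -> path R x p ->
  path [rel u w | [&& R u w, connect R r u & connect R r w]] x p.
  by apply; rewrite ?connect0.
elim: p {pth} => //= y p IH x rx /andP [Rxy pth].
have ry : connect R r y := ctrans rx (connect1 Rxy).
by rewrite Rxy rx ry /= IH.
Qed.

Lemma induced_sym e S : symmetric e -> symmetric (induced e S).
Proof. by move=> es u w; rewrite /induced /= es; case: (u \in S); case: (w \in S); rewrite ?andbF. Qed.

Lemma conn_sym e S x y : symmetric e -> connect (induced e S) x y -> connect (induced e S) y x.
Proof. by move=> es; rewrite (sym_connect_sym (induced_sym S es)). Qed.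

Definition Q e B c := [/\ 1 < #|B|, connected_on e B, c \in B &
  forall u w, u \in B -> w \notin B -> e u w -> u = c].

Lemma closed_sub e B c S x : c \in B -> (forall u w, u \in B -> w \notin B -> e u w -> u = c) ->
  biconnected e S -> x \in S -> x \in B -> x != c -> S \subset B.
Proof.
move=> cB cl [_ [Sc Sb]] xS xB xc; apply/subsetP => y yS; apply/negPn/negP => yB.
case cS: (c \in S).
- have yc : y != c by apply/eqP => E; move: yB; rewrite E cB.
  have := Sb c cS x y; rewrite !inE xc yc xS yS => /(_ isT isT) Hc.
  have [u [w [uB wB /= /and3P [euw uS _]]]] := cross Hc xB yB.
  by move: uS; rewrite (cl u w uB wB euw) !inE eqxx.
- have [u [w [uB wB /= /and3P [euw uS _]]]] := cross (Sc x y xS yS) xB yB.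
  by move: uS; rewrite (cl u w uB wB euw) cS.
Qed.

Lemma card2 A x y : x \in A -> y \in A -> x != y -> 1 < #|A|.
Proof.
move=> xA yA xy; have : [set x; y] \subset A.
  by apply/subsetP => z; rewrite !inE => /orP [] /eqP ->.
by move/subset_leq_card; rewrite cards2 xy.
Qed.

Lemma shrink e B c : symmetric e -> Q e B c -> ~ biconnected e B ->
  exists B' c', Q e B' c' /\ #|B'| < #|B|.
Proof.
move=> es [B1 Bc cB cl] nb; apply: NNPP => H; apply: nb; split => //; split => //.
move=> x xB y z yB zB; apply: NNPP => ncon; apply: H.
set R := induced e (B :\ x).
have Rsym : forall u w, connect R u w -> connect R w u by move=> u w; apply: conn_sym.
suff claim : forall r r', r \in B :\ x -> r' \in B :\ x -> ~ connect R r r' ->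
    c \notin [set w | connect R r w] -> exists B' c', Q e B' c' /\ #|B'| < #|B|.
  case cy: (connect R y c).
  - apply: (claim z y zB yB); first by move/Rsym.
    by rewrite inE; apply/negP => zc; apply: ncon; apply: ctrans cy (Rsym _ _ zc).
  - by apply: (claim y z yB zB ncon); rewrite inE cy.
move=> r r' rB r'B nrr cC.
set C := [set w | connect R r w].
have Csub : forall w, w \in C -> w \in B :\ x.
  move=> w; rewrite inE => rw; apply/negPn/negP => wn.
  by have [u [w' [_ w'n /and3P [_ _ w'in]]]] := cross rw rB wn; rewrite w'in in w'n.
have Csub' : forall w, w \in C -> w \in B.
  by move=> w /Csub; rewrite inE => /andP [].
have rC : r \in C by rewrite inE connect0.
have r'C : r' \notin C by rewrite inE; apply/negP.
have xC : x \notin C by apply/negP => /Csub; rewrite !inE eqxx.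
have xr : x != r by apply/eqP => E; move: xC; rewrite E rC.
exists (x |: C), x; split; last first.
  apply: proper_card; apply/properP; split.
    apply/subsetP => w; rewrite in_setU1 => /orP [/eqP ->//|/Csub]; by rewrite inE => /andP [].
  exists r'; first by move: r'B; rewrite inE => /andP [].
  rewrite in_setU1 negb_or r'C andbT; apply/eqP => E; move: r'B; by rewrite E !inE eqxx.
have rB' : r \in B by move: rB; rewrite inE => /andP [].
have lift : forall w, w \in C -> connect (induced e (x |: C)) r w.
  move=> w; rewrite inE => /connect_comp; apply: connect_mono => u w' /=.
  case/and3P => /and3P [euw _ _] ru rw'.
  by rewrite /induced /= euw !in_setU1 !inE ru rw' !orbT.
have xrconn : connect (induced e (x |: C)) x r.
  have [u [w [uC wC /= /and3P [euw uB wB]]]] := cross (Bc r x rB' xB) rC xC.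
  have wx : w = x.
    apply/eqP; apply/negPn/negP => wx; move: wC; rewrite inE.
    have uBx := Csub u uC.
    have Ruw : R u w by rewrite /R /induced /= euw uBx !inE wx wB.
    by move: uC; rewrite inE => ru; rewrite (ctrans ru (connect1 Ruw)).
  subst w.
  apply: (@ctrans _ x u r).
    apply: connect1; rewrite /induced /= es euw !in_setU1 eqxx uC orbT //.
  exact: conn_sym es (lift u uC).
have xconn : forall w, w \in x |: C -> connect (induced e (x |: C)) x w.
  move=> w; rewrite in_setU1 => /orP [/eqP ->|wC]; first exact: connect0.
  exact: ctrans xrconn (lift w wC).
split.
- by apply: (card2 (x := x) (y := r)); rewrite ?in_setU1 ?eqxx ?rC ?orbT.
- move=> u w uB wB; exact: ctrans (conn_sym es (xconn u uB)) (xconn w wB).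
- by rewrite in_setU1 eqxx.
- move=> u w; rewrite !in_setU1 => /orP [/eqP ->//|uC]; rewrite negb_or => /andP [wx wC] euw.
  exfalso; have uBx := Csub u uC.
  case wB: (w \in B).
    have Ruw : R u w by rewrite /R /induced /= euw uBx !inE wx wB.
    move: wC; rewrite inE => /negP; apply; move: uC; rewrite inE => ru.
    exact: ctrans ru (connect1 Ruw).
  have uc := cl u w (Csub' u uC) (negbT wB) euw.
  by move: cC; rewrite -uc uC.
Qed.

Lemma init_Q e x y : simple_graph e -> e x y -> exists B c, Q e B c.
Proof.
move=> [es eirr] exy.
set B := [set w | connect e x w].
have lift : forall w, w \in B -> connect (induced e B) x w.
  move=> w; rewrite inE => /connect_comp; apply: connect_mono => u w' /= /and3P [euw xu xw].
  by rewrite /induced /= euw !inE xu xw.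
exists B, x; split.
- apply: (card2 (x:=x) (y:=y)); rewrite ?inE ?connect0 ?connect1 //.
  by apply/eqP => E; move: exy; rewrite E eirr.
- move=> u w uB wB; exact: ctrans (conn_sym es (lift u uB)) (lift w wB).
- by rewrite inE connect0.
- move=> u w; rewrite !inE => xu xw euw; exfalso; move/negP: xw; apply.
  exact: ctrans xu (connect1 euw).
Qed.

Lemma exists_bic e : simple_graph e -> (exists x y, e x y) ->
  exists B c, Q e B c /\ biconnected e B.
Proof.
move=> sg [x [y exy]]; have [B [c QB]] := init_Q sg exy.
move: {2}#|B| (leqnn #|B|) => n; elim: n B c QB => [|n IH] B c QB Hn.
- by case: QB => B1 _ _ _; lia.
- case: (classic (biconnected e B)) => bic; first by exists B, c.
  have [B' [c' [QB' lt]]] := shrink sg.1 QB bic.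
  apply: (IH B' c' QB'); lia.
Qed.

End Aux.

Theorem mainTheorem1 (T : finType) (e : rel T) (a : nat) :
  simple_graph e ->
  (exists x y, e x y) ->
  arboricity e a ->
  1 <= a ->
  exists v, block_vertex e v /\ deg e v <= 2 * a - 1.
Proof.
move=> sg ex [[F [Ff Fe Fc]] _] a1.
have es := sg.1.
have [B [c [[B1 Bc cB cl] bic]]] := exists_bic sg ex.
have [x xB xc] := two_elems c B1.
have blk : block e B.
  split => // B' sub bic'; apply/eqP; rewrite eqEsubset sub andbT.
  exact: (closed_sub cB cl bic' (subsetP sub x xB) xB xc).
have degc : 0 < #|N e B c|.
  rewrite card_gt0; apply/set0Pn.
  have xnc : x \notin [set c] by rewrite inE.
  have [u [w [uc wc /= /and3P [euw _ wB]]]] := cross (Bc c x cB xB) (set11 c) xnc.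
  move/set1P: uc => uc; subst u.
  by exists w; rewrite /N inE wB euw.
have Sbound : Sm e B <= a * (2 * (#|B| - 1)).
  apply: (@leq_trans (\sum_(i < a) Sm (F i) B)).
    rewrite /Sm exchange_big /=; apply: leq_sum => v vB.
    rewrite (cardN e B v).
    have -> : \sum_(i < a) #|N (F i) B v| = \sum_(i < a) \sum_(w in B) (F i v w : nat).
      by apply: eq_bigr => i _; rewrite (cardN (F i) B v).
    rewrite exchange_big /=; apply: leq_sum => w wB.
    case evw: (e v w) => //.
    have [i Fi] := Fc v w evw.
    by rewrite (bigD1 i) //= Fi.
  apply: (@leq_trans (\sum_(i < a) (2 * (#|B| - 1)))).
    by apply: leq_sum => i _; apply: forest_sum.
  by rewrite sum_nat_const card_ord.
have [v [vB vc vd]] : exists v, [/\ v \in B, v != c & #|N e B v| < 2 * a].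
  apply: NNPP => H.
  have H' : forall v, v \in B :\ c -> 2 * a <= #|N e B v|.
    move=> v; rewrite !inE => /andP [vc vB]; rewrite leqNgt; apply/negP => lt.
    by apply: H; exists v; split.
  have E : Sm e B = #|N e B c| + \sum_(v in B :\ c) #|N e B v|.
    rewrite /Sm (bigD1 c cB); congr (_ + _); apply: eq_bigl => u.
    by rewrite !inE andbC.
  have L : \sum_(v in B :\ c) (2 * a) <= \sum_(v in B :\ c) #|N e B v|.
    exact: leq_sum H'.
  rewrite sum_nat_const in L.
  have cardBc : #|B :\ c| = #|B| - 1.
    have := cardsD1 c B; rewrite cB /=; lia.
  rewrite cardBc in L.
  nia.
exists v; split.
  exists B; split => // B' blk' vB'.
  have [bic' max'] := blk'.
  have sub := closed_sub cB cl bic' vB' vB vc.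
  by symmetry; apply: max'.
rewrite /deg.
have -> : #|[set w | e v w]| = #|N e B v|.
  apply: eq_card => w; rewrite /N !inE.
  case evw: (e v w); rewrite ?andbT ?andbF //.
  symmetry; apply/negPn/negP => wB.
  by move: vc; rewrite (cl v w vB wB evw) eqxx.
lia.
Qed.
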